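(* Let $\mathfrak{CD}^3_{03}$ be the complex algebra with basis $e_1,e_2,e_3$ and nonzero products $e_1e_1=e_2$, $e_2e_1=e_3$. Let $\mathbf B$ be a complex $4$-dimensional algebra such that $\dim\operatorname{Ann}(\mathbf B)=1$, $\mathbf B/\operatorname{Ann}(\mathbf B)\cong\mathfrak{CD}^3_{03}$, and $\mathbf B$ is not a $\mathfrak{CD}$-algebra. Then $\mathbf B$ is isomorphic to one of the following algebras with basis $e_1,\dots,e_4$ (unlisted products of basis vectors are zero; Greek letters are arbitrary complex parameters unless restricted): $\mathbf N_{26}(\alpha)$: $e_1e_1=e_2,\ e_1e_2=e_4,\ e_1e_3=-\alpha e_4,\ e_2e_1=e_3,\ e_2e_2=\alpha e_4,\ e_3e_1=(1+2\alpha)e_4$; $\mathbf N_{27}(\alpha,\beta)$: $e_1e_1=e_2,\ e_1e_2=\alpha e_4,\ e_2e_1=e_3,\ e_2e_2=\beta e_4,\ e_2e_3=e_4,\ e_3e_1=e_4$; $\mathbf N_{28}(\alpha,\beta,\gamma)$: $e_1e_1=e_2,\ e_1e_2=\alpha e_4,\ e_2e_1=e_3,\ e_2e_2=\beta e_4,\ e_2e_3=e_4,\ e_3e_1=\gamma e_4,\ e_3e_3=e_4$; $\mathbf N_{29}(\alpha,\beta)$: $e_1e_1=e_2,\ e_1e_2=\alpha e_4,\ e_2e_1=e_3,\ e_2e_2=\beta e_4,\ e_3e_1=e_4,\ e_3e_3=e_4$; $\mathbf N_{30}(\alpha)$: $e_1e_1=e_2,\ e_1e_2=\alpha e_4,\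 e_2e_1=e_3,\ e_2e_2=e_4,\ e_2e_3=e_4$; $\mathbf N_{31}(\alpha)$: $e_1e_1=e_2,\ e_1e_2=\alpha e_4,\ e_2e_1=e_3,\ e_2e_2=e_4,\ e_3e_3=e_4$; $\mathbf N_{32}$: $e_1e_1=e_2,\ e_1e_2=e_4,\ e_2e_1=e_3,\ e_2e_3=e_4$; $\mathbf N_{33}$: $e_1e_1=e_2,\ e_1e_2=e_4,\ e_2e_1=e_3,\ e_3e_3=e_4$; $\mathbf N_{34}(\alpha,\beta)$: $e_1e_1=e_2,\ e_1e_3=\beta e_4,\ e_2e_1=e_3,\ e_2e_2=\alpha e_4,\ e_3e_1=(1-2\beta)e_4$; $\mathbf N_{35}(\alpha)$: $e_1e_1=e_2,\ e_1e_3=\alpha e_4,\ e_2e_1=e_3,\ e_2e_2=e_4,\ e_3e_1=-2\alpha e_4,\ e_3e_2=e_4$; $\mathbf N_{36}(\alpha,\beta)$ with $\beta\neq0$: $e_1e_1=e_2,\ e_2e_1=e_3,\ e_2e_2=\alpha e_4,\ e_2e_3=\beta e_4,\ e_3e_1=e_4,\ e_3e_2=e_4$; $\mathbf N_{37}(\alpha)$ with $\alpha\ne0$: $e_1e_1=e_2,\ e_2e_1=e_3,\ e_2e_2=e_4,\ e_2e_3=\alpha e_4,\ e_3e_2=e_4$; $\mathbf N_{38}$: $e_1e_1=e_2,\ e_1e_3=e_4,\ e_2e_1=e_3,\ e_3e_1=-2e_4,\ e_3e_2=e_4$; $\mathbf N_{39}$: $e_1e_1=e_2,\ e_2e_1=e_3,\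 e_2e_3=e_4$; $\mathbf N_{40}(\alpha)$: $e_1e_1=e_2,\ e_2e_1=e_3,\ e_2e_3=\alpha e_4,\ e_3e_2=e_4$; $\mathbf N_{41}$: $e_1e_1=e_2,\ e_2e_1=e_3,\ e_3e_3=e_4$. All algebras in this list (for all admissible parameter values) are pairwise non-isomorphic, except that $\mathbf N_{29}(\alpha,\beta)\cong\mathbf N_{29}(-\alpha,\beta)$ and $\mathbf N_{31}(\alpha)\cong\mathbf N_{31}(-\alpha)$.
   Context: All algebras are complex vector spaces with a bilinear multiplication, with no identities assumed. The annihilator of an algebra $\mathbf A$ is $\operatorname{Ann}(\mathbf A)=\{x\in\mathbf A: x\mathbf A=\mathbf Ax=0\}$. An algebra $\mathbf A$ is a $\mathfrak{CD}$-algebra if for all $x,y,a,b\in\mathbf A$: $((xy)a)b-((xy)b)a=((xa)b-(xb)a)y+x((ya)b-(yb)a)$, $(a(xy))b-a((xy)b)=((ax)b-a(xb))y+x((ay)b-a(yb))$, $a(b(xy))-b(a(xy))=(a(bx)-b(ax))y+x(a(by)-b(ay))$ (equivalently, every commutator $[T_x,T_y]$ of operators $T_x,T_y$, each a left or right multiplication operator, is a derivation). *)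

(* Defs.v *)
From mathcomp Require Import all_boot all_order all_algebra.
From mathcomp Require Import complex Rstruct.
Set Implicit Arguments. Unset Strict Implicit. Unset Printing Implicit Defensive.
Import GRing.Theory.
Local Open Scope ring_scope.

Definition C : numClosedFieldType := complex.complex Rdefinitions.R.

(* An n-dimensional (not necessarily associative, no unit) complex algebra is
   given by its structure constants in a basis: T i j = e_i e_j, a row vector
   of coordinates. *)
Definition sconst (n : nat) := 'I_n -> 'I_n -> 'rV[C]_n.

Definition amul (n : nat) (T : sconst n) (x y : 'rV[C]_n) : 'rV[C]_n :=
  \sum_(i < n) \sum_(j < n) (x 0 i * y 0 j) *: T i j.

Definition in_ann (n : nat) (T : sconst n) (x : 'rV[C]_n) : Prop :=
  forall y, amul T x y = 0 /\ amul T y x = 0.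

Definition ann_dim1 (n : nat) (T : sconst n) : Prop :=
  exists a : 'rV[C]_n, a != 0 /\ forall x, in_ann T x <-> exists k : C, x = k *: a.

Definition is_CD (n : nat) (T : sconst n) : Prop :=
  let m := amul T in
  forall x y a b : 'rV[C]_n,
    m (m (m x y) a) b - m (m (m x y) b) a
      = m (m (m x a) b - m (m x b) a) y + m x (m (m y a) b - m (m y b) a)
 /\ m (m a (m x y)) b - m a (m (m x y) b)
      = m (m (m a x) b - m a (m x b)) y + m x (m (m a y) b - m a (m y b))
 /\ m a (m b (m x y)) - m b (m a (m x y))
      = m (m a (m b x) - m b (m a x)) y + m x (m a (m b y) - m b (m a y)).

Definition alg_iso (n : nat) (T1 T2 : sconst n) : Prop :=
  exists P : 'M[C]_n, P \in unitmx /\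
    forall x y, amul T1 x y *m P = amul T2 (x *m P) (y *m P).

(* A / Ann(A) is isomorphic to the m-dimensional algebra S: there is a
   surjective algebra homomorphism A -> S whose kernel is exactly Ann(A)
   (first isomorphism theorem). *)
Definition quot_ann_iso (n m : nat) (T : sconst n) (S : sconst m) : Prop :=
  exists f : 'M[C]_(n, m), row_full f /\
    (forall x y, amul T x y *m f = amul S (x *m f) (y *m f)) /\
    (forall x, in_ann T x <-> x *m f = 0).

(* 1-based basis vectors e_1, ..., e_n *)
Definition bvec (n : nat) (k : nat) : 'rV[C]_n.+1 := delta_mx 0 (inord k.-1).

Definition CD3_03 : sconst 3 := fun i j =>
  match (i : nat).+1, (j : nat).+1 with
  | 1, 1 => bvec 2 2
  | 2, 1 => bvec 2 3
  | _, _ => 0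
  end.

Inductive Nlab : Type :=
  | N26 of C | N27 of C & C | N28 of C & C & C | N29 of C & C
  | N30 of C | N31 of C | N32 | N33 | N34 of C & C | N35 of C
  | N36 of C & C | N37 of C | N38 | N39 | N40 of C | N41.

Definition Nadm (l : Nlab) : Prop :=
  match l with
  | N36 _ b => b != 0
  | N37 a => a != 0
  | _ => True
  end.

(* coefficient of e4 in e_i e_j (1-based indices) *)
Definition Ncoef (l : Nlab) (i j : nat) : C :=
  match l, i, j with
  | N26 a, 1, 2 => 1 | N26 a, 1, 3 => - a | N26 a, 2, 2 => a
  | N26 a, 3, 1 => 1 + 2 * a
  | N27 a b, 1, 2 => a | N27 a b, 2, 2 => b | N27 a b, 2, 3 => 1
  | N27 a b, 3, 1 => 1
  | N28 a b c, 1, 2 => a | N28 a b c, 2, 2 => b | N28 a b c, 2, 3 => 1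
  | N28 a b c, 3, 1 => c | N28 a b c, 3, 3 => 1
  | N29 a b, 1, 2 => a | N29 a b, 2, 2 => b | N29 a b, 3, 1 => 1
  | N29 a b, 3, 3 => 1
  | N30 a, 1, 2 => a | N30 a, 2, 2 => 1 | N30 a, 2, 3 => 1
  | N31 a, 1, 2 => a | N31 a, 2, 2 => 1 | N31 a, 3, 3 => 1
  | N32, 1, 2 => 1 | N32, 2, 3 => 1
  | N33, 1, 2 => 1 | N33, 3, 3 => 1
  | N34 a b, 1, 3 => b | N34 a b, 2, 2 => a | N34 a b, 3, 1 => 1 - 2 * b
  | N35 a, 1, 3 => a | N35 a, 2, 2 => 1 | N35 a, 3, 1 => - (2 * a)
  | N35 a, 3, 2 => 1
  | N36 a b, 2, 2 => a | N36 a b, 2, 3 => b | N36 a b, 3, 1 => 1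
  | N36 a b, 3, 2 => 1
  | N37 a, 2, 2 => 1 | N37 a, 2, 3 => a | N37 a, 3, 2 => 1
  | N38, 1, 3 => 1 | N38, 3, 1 => - 2 | N38, 3, 2 => 1
  | N39, 2, 3 => 1
  | N40 a, 2, 3 => a | N40 a, 3, 2 => 1
  | N41, 3, 3 => 1
  | _, _, _ => 0
  end.

Definition Nalg (l : Nlab) : sconst 4 := fun i j =>
  let i' := (i : nat).+1 in let j' := (j : nat).+1 in
  (if (i' == 1%N) && (j' == 1%N) then bvec 3 2 else 0)
  + (if (i' == 2%N) && (j' == 1%N) then bvec 3 3 else 0)
  + Ncoef l i' j' *: bvec 3 4.

(* Main.v *)
Require Import Defs.
From mathcomp Require Import all_boot all_order all_algebra.
From mathcomp Require Import ring.
From Stdlib Require Import FunctionalExtensionality.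
Import GRing.Theory Num.Theory.
Local Open Scope ring_scope.


Definition Ext (th : nat -> nat -> C) : sconst 4 := fun i j =>
  let i' := (i : nat).+1 in let j' := (j : nat).+1 in
  (if (i' == 1%N) && (j' == 1%N) then bvec 3 2 else 0)
  + (if (i' == 2%N) && (j' == 1%N) then bvec 3 3 else 0)
  + th i' j' *: bvec 3 4.

Lemma NalgE l : Nalg l = Ext (Ncoef l). Proof. by []. Qed.

Definition o0 : 'I_4 := @Ordinal 4 0 isT.
Definition o1 : 'I_4 := @Ordinal 4 1 isT.
Definition o2 : 'I_4 := @Ordinal 4 2 isT.
Definition o3 : 'I_4 := @Ordinal 4 3 isT.

Lemma sum4 (F : 'I_4 -> C) : \sum_(i < 4) F i = F o0 + F o1 + F o2 + F o3.
Proof.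
rewrite !big_ord_recl big_ord0 addr0 !addrA.
congr (F _ + F _ + F _ + F _); exact: val_inj.
Qed.

Lemma sum4m (F : 'I_4 -> 'rV[C]_4) : \sum_(i < 4) F i = F o0 + F o1 + F o2 + F o3.
Proof.
rewrite !big_ord_recl big_ord0 addr0 !addrA.
congr (F _ + F _ + F _ + F _); exact: val_inj.
Qed.

Lemma ord4P (P : 'I_4 -> Prop) : P o0 -> P o1 -> P o2 -> P o3 -> forall k, P k.
Proof.
move=> h0 h1 h2 h3 [[|[|[|[|k]]]] Hk] //.
- by have -> : Ordinal Hk = o0 by exact: val_inj.
- by have -> : Ordinal Hk = o1 by exact: val_inj.
- by have -> : Ordinal Hk = o2 by exact: val_inj.
- by have -> : Ordinal Hk = o3 by exact: val_inj.
Qed.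

Definition r4 (c0 c1 c2 c3 : C) : 'rV[C]_4 := \row_(k < 4) nth 0 [:: c0; c1; c2; c3] k.

Lemma r4E c0 c1 c2 c3 :
  ((r4 c0 c1 c2 c3) 0 o0 = c0) * ((r4 c0 c1 c2 c3) 0 o1 = c1) *
  ((r4 c0 c1 c2 c3) 0 o2 = c2) * ((r4 c0 c1 c2 c3) 0 o3 = c3).
Proof. by rewrite !mxE. Qed.

Lemma r4_eq (v : 'rV[C]_4) : v = r4 (v 0 o0) (v 0 o1) (v 0 o2) (v 0 o3).
Proof.
apply/rowP; apply: ord4P; by rewrite !mxE.
Qed.

Lemma r4_inj a0 a1 a2 a3 b0 b1 b2 b3 :
  a0 = b0 -> a1 = b1 -> a2 = b2 -> a3 = b3 -> r4 a0 a1 a2 a3 = r4 b0 b1 b2 b3.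
Proof. by move=> -> -> -> ->. Qed.

Lemma bvecE n (k : 'I_4) : (n <= 4)%N -> (bvec 3 n) 0 k = ((k : nat) == n.-1)%:R.
Proof.
move=> hn; rewrite /bvec mxE eqxx /= -val_eqE /= inordK //.
by case: n hn => [|n] //= /ltnW.
Qed.

Lemma eq_inord4 (k : 'I_4) n : (n < 4)%N -> (k == inord n) = ((k : nat) == n).
Proof. by move=> hn; rewrite -val_eqE /= inordK. Qed.

Lemma ExtE th (i j k : 'I_4) : (Ext th i j) 0 k =
  (if ((i : nat) == 0%N) && ((j : nat) == 0%N) then ((k : nat) == 1%N)%:R else 0)
  + (if ((i : nat) == 1%N) && ((j : nat) == 0%N) then ((k : nat) == 2%N)%:R else 0)
  + th i.+1 j.+1 * ((k : nat) == 3%N)%:R.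
Proof.
rewrite /Ext !mxE; case: ifP => _; case: ifP => _; by rewrite ?mxE ?eq_inord4.
Qed.

Lemma eqnb (a b : nat) : (a == b) = Nat.eqb a b.
Proof. by case: eqP; case: PeanoNat.Nat.eqb_spec. Qed.

Lemma ExtE' th (i j k : 'I_4) : (Ext th i j) 0 k =
  ((if Nat.eqb i 0 && Nat.eqb j 0 && Nat.eqb k 1 then 1 else 0)
  + (if Nat.eqb i 1 && Nat.eqb j 0 && Nat.eqb k 2 then 1 else 0)
  + th i.+1 j.+1 * (if Nat.eqb k 3 then 1 else 0)).
Proof.
rewrite ExtE !eqnb.
by case: (Nat.eqb i 0); case: (Nat.eqb i 1); case: (Nat.eqb j 0); case: (Nat.eqb k 1);
  case: (Nat.eqb k 2); case: (Nat.eqb k 3).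
Qed.

Lemma amulE n (T : sconst n) x y k :
  (amul T x y) 0 k = \sum_i \sum_j x 0 i * y 0 j * (T i j) 0 k.
Proof.
rewrite /amul summxE; apply: eq_bigr => i _; rewrite summxE.
by apply: eq_bigr => j _; rewrite mxE.
Qed.

Definition bil (th : nat -> nat -> C) (x y : 'rV[C]_4) :=
  \sum_(i < 4) \sum_(j < 4) x 0 i * y 0 j * th i.+1 j.+1.

Lemma amul_Ext th x y : amul (Ext th) x y =
  r4 0 (x 0 o0 * y 0 o0) (x 0 o1 * y 0 o0) (bil th x y).
Proof.
apply/rowP; apply: ord4P; rewrite amulE /bil !mxE;
  under eq_bigr => i _ do under eq_bigr => j _ do rewrite ExtE';
  rewrite !sum4; cbn [Nat.eqb andb nat_of_ord o0 o1 o2 o3 nth]; ring.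
Qed.

Definition nf (th : nat -> nat -> C) := forall k, th 4%N k = 0 /\ th k 4%N = 0.

Lemma Ncoef_nf l : nf (Ncoef l).
Proof. move=> k; case: l => *; split => //=; case: k => [|[|[|[|k]]]] //. Qed.

Definition tr (a b c lam : C) (t : nat -> nat -> C) : nat -> nat -> C := fun i j =>
  match i, j with
  | 1, 2 => lam^-1 * (a^+3 * t 1%N 2%N + a^+2 * b * t 1%N 3%N + a^+2 * b * t 2%N 2%N
              + a * b^+2 * t 2%N 3%N + a^+2 * c * t 3%N 2%N + a * b * c * t 3%N 3%N)
  | 1, 3 => lam^-1 * (a^+4 * t 1%N 3%N + a^+3 * b * t 2%N 3%N + a^+3 * c * t 3%N 3%N)
  | 2, 2 => lam^-1 * (a^+4 * t 2%N 2%N + a^+3 * b * (t 2%N 3%N + t 3%N 2%N)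
              + a^+2 * b^+2 * t 3%N 3%N)
  | 2, 3 => lam^-1 * (a^+5 * t 2%N 3%N + a^+4 * b * t 3%N 3%N)
  | 3, 1 => lam^-1 * (a^+4 * t 3%N 1%N + a^+3 * b * t 3%N 2%N + a^+3 * c * t 3%N 3%N)
  | 3, 2 => lam^-1 * (a^+5 * t 3%N 2%N + a^+4 * b * t 3%N 3%N)
  | 3, 3 => lam^-1 * (a^+6 * t 3%N 3%N)
  | _, _ => 0
  end.

Definition mk4 (f : nat -> nat -> C) : 'M[C]_4 := \matrix_(i < 4, j < 4) f i j.

Definition Pm (a b c e f lam : C) : nat -> nat -> C := fun i j =>
  match i, j with
  | 0, 0 => a | 0, 1 => b | 0, 2 => c
  | 1, 1 => a^+2 | 1, 2 => a * b | 1, 3 => e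
  | 2, 2 => a^+3 | 2, 3 => f
  | 3, 3 => lam
  | _, _ => 0
  end.

Lemma mulr4 (v : 'rV[C]_4) (f : nat -> nat -> C) :
  v *m mk4 f = r4 (v 0 o0 * f 0%N 0%N + v 0 o1 * f 1%N 0%N + v 0 o2 * f 2%N 0%N + v 0 o3 * f 3%N 0%N)
                  (v 0 o0 * f 0%N 1%N + v 0 o1 * f 1%N 1%N + v 0 o2 * f 2%N 1%N + v 0 o3 * f 3%N 1%N)
                  (v 0 o0 * f 0%N 2%N + v 0 o1 * f 1%N 2%N + v 0 o2 * f 2%N 2%N + v 0 o3 * f 3%N 2%N)
                  (v 0 o0 * f 0%N 3%N + v 0 o1 * f 1%N 3%N + v 0 o2 * f 2%N 3%N + v 0 o3 * f 3%N 3%N).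
Proof.
apply/rowP; apply: ord4P; rewrite !mxE sum4 /mk4 !mxE //.
Qed.

Lemma bilE th (x y : 'rV[C]_4) : bil th x y =
  \sum_(i < 4) \sum_(j < 4) x 0 i * y 0 j * th i.+1 j.+1.
Proof. by []. Qed.

Lemma inj_unit (A : 'M[C]_4) : (forall v : 'rV[C]_4, v *m A = 0 -> v = 0) -> A \in unitmx.
Proof.
move=> H; rewrite -row_free_unit -kermx_eq0; apply/eqP/row_matrixP => i.
by rewrite row0; apply: H; rewrite -row_mul mulmx_ker row0.
Qed.

Lemma iso_tr (a b c lam : C) th : a != 0 -> lam != 0 -> nf th ->
  alg_iso (Ext (tr a b c lam th)) (Ext th).
Proof.
move=> a0 l0 hnf.
pose t := th.
pose e := a*a*t 1%N 1%N + a*b*t 1%N 2%N + a*c*t 1%N 3%N + b*a*t 2%N 1%N + b*b*t 2%N 2%N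
   + b*c*t 2%N 3%N + c*a*t 3%N 1%N + c*b*t 3%N 2%N + c*c*t 3%N 3%N.
pose f := a^+2*a*t 2%N 1%N + a^+2*b*t 2%N 2%N + a^+2*c*t 2%N 3%N + a*b*a*t 3%N 1%N
   + a*b*b*t 3%N 2%N + a*b*c*t 3%N 3%N.
exists (mk4 (Pm a b c e f lam)); split.
  apply: inj_unit => v; rewrite mulr4 [v]r4_eq !r4E.
  move/rowP=> h; have h0 := h o0; have h1 := h o1; have h2 := h o2; have h3 := h o3.
  rewrite !mxE in h0 h1 h2 h3.
  cbn [Pm nat_of_ord o0 o1 o2 o3 nth] in h0, h1, h2, h3.
  rewrite !mulr0 !addr0 in h0 h1 h2 h3.
  move/eqP: h0; rewrite mulf_eq0 (negbTE a0) orbF => /eqP v0.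
  rewrite v0 !mul0r !add0r in h1 h2 h3.
  move/eqP: h1; rewrite mulf_eq0 expf_eq0 (negbTE a0) andbF orbF => /eqP v1.
  rewrite v1 !mul0r !add0r in h2 h3.
  move/eqP: h2; rewrite mulf_eq0 expf_eq0 (negbTE a0) andbF orbF => /eqP v2.
  rewrite v2 !mul0r !add0r in h3.
  move/eqP: h3; rewrite mulf_eq0 (negbTE l0) orbF => /eqP v3.
  by rewrite v0 v1 v2 v3; apply/rowP; apply: ord4P; rewrite !mxE.
move=> x y.
rewrite !amul_Ext !mulr4 /bil.
rewrite !sum4 !r4E.
have [h1 h1'] := hnf 1%N; have [h2 h2'] := hnf 2%N; have [h3 h3'] := hnf 3%N; have [h4 h4'] := hnf 4%N.
cbn [Pm tr nat_of_ord o0 o1 o2 o3].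
rewrite ?h1 ?h1' ?h2 ?h2' ?h3 ?h3' ?h4 ?h4'.
apply: r4_inj; rewrite /e /f /t.
- ring.
- ring.
- ring.
- field; done.
Qed.

Lemma alg_iso_sym n (T1 T2 : sconst n) : alg_iso T1 T2 -> alg_iso T2 T1.
Proof.
case=> P [Pu H]; exists (invmx P); split; first by rewrite unitmx_inv.
move=> x y; have := H (x *m invmx P) (y *m invmx P).
rewrite !mulmxKV // => <-; by rewrite mulmxK.
Qed.

Lemma alg_iso_trans n (T1 T2 T3 : sconst n) : alg_iso T1 T2 -> alg_iso T2 T3 -> alg_iso T1 T3.
Proof.
case=> P [Pu H]; case=> Q [Qu K]; exists (P *m Q); split; first by rewrite unitmx_mul Pu.
by move=> x y; rewrite mulmxA H K !mulmxA.
Qed.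

Lemma alg_iso_refl n (T : sconst n) : alg_iso T T.
Proof. by exists 1%:M; split; [exact: unitmx1 | move=> x y; rewrite !mulmx1]. Qed.

Lemma mulr4g (v : 'rV[C]_4) (P : 'M[C]_4) :
  v *m P = r4 (v 0 o0 * P o0 o0 + v 0 o1 * P o1 o0 + v 0 o2 * P o2 o0 + v 0 o3 * P o3 o0)
              (v 0 o0 * P o0 o1 + v 0 o1 * P o1 o1 + v 0 o2 * P o2 o1 + v 0 o3 * P o3 o1)
              (v 0 o0 * P o0 o2 + v 0 o1 * P o1 o2 + v 0 o2 * P o2 o2 + v 0 o3 * P o3 o2)
              (v 0 o0 * P o0 o3 + v 0 o1 * P o1 o3 + v 0 o2 * P o2 o3 + v 0 o3 * P o3 o3).
Proof. apply/rowP; apply: ord4P; by rewrite !mxE sum4. Qed.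

Lemma r4_inv a0 a1 a2 a3 b0 b1 b2 b3 :
  r4 a0 a1 a2 a3 = r4 b0 b1 b2 b3 -> [/\ a0 = b0, a1 = b1, a2 = b2 & a3 = b3].
Proof.
move=> h; have := congr1 (fun v : 'rV[C]_4 => (v 0 o0, v 0 o1, v 0 o2, v 0 o3)) h.
by rewrite !r4E => -[].
Qed.

Lemma col_unit (P : 'M[C]_4) j : P \in unitmx -> ~ (forall k, P k j = 0).
Proof.
move=> Pu H; have := congr1 (fun M : 'M[C]_4 => M j j) (mulVmx Pu).
rewrite [in RHS]mxE eqxx mxE big1 => [/eqP|k _]; first by rewrite eq_sym oner_eq0.
by rewrite H mulr0.
Qed.

Lemma row_unit (P : 'M[C]_4) i : P \in unitmx -> ~ (forall k, P i k = 0).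
Proof.
move=> Pu H; have := congr1 (fun M : 'M[C]_4 => M i i) (mulmxV Pu).
rewrite [in RHS]mxE eqxx mxE big1 => [/eqP|k _]; first by rewrite eq_sym oner_eq0.
by rewrite H mul0r.
Qed.

Definition Eqs (a b c lam : C) (t u : nat -> nat -> C) : Prop :=
  [/\ lam * t 1%N 2%N = a^+3 * u 1%N 2%N + a^+2 * b * u 1%N 3%N + a^+2 * b * u 2%N 2%N
              + a * b^+2 * u 2%N 3%N + a^+2 * c * u 3%N 2%N + a * b * c * u 3%N 3%N,
      lam * t 1%N 3%N = a^+4 * u 1%N 3%N + a^+3 * b * u 2%N 3%N + a^+3 * c * u 3%N 3%N,
      lam * t 2%N 2%N = a^+4 * u 2%N 2%N + a^+3 * b * (u 2%N 3%N + u 3%N 2%N)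
              + a^+2 * b^+2 * u 3%N 3%N,
      lam * t 2%N 3%N = a^+5 * u 2%N 3%N + a^+4 * b * u 3%N 3%N &
   [/\ lam * t 3%N 1%N = a^+4 * u 3%N 1%N + a^+3 * b * u 3%N 2%N + a^+3 * c * u 3%N 3%N,
      lam * t 3%N 2%N = a^+5 * u 3%N 2%N + a^+4 * b * u 3%N 3%N &
      lam * t 3%N 3%N = a^+6 * u 3%N 3%N]].

Definition annP (u : nat -> nat -> C) :=
  ~ [/\ u 3%N 1%N = 0, u 3%N 2%N = 0, u 3%N 3%N = 0, u 1%N 3%N = 0 & u 2%N 3%N = 0].


Lemma eq1 (L R A B : C) : L = R -> A - B = L - R -> A = B.
Proof. by move=> -> /eqP; rewrite subrr subr_eq0 => /eqP. Qed.

Arguments eq1 {L R A B}.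
Lemma eq1' (L R A B : C) : L = R -> A - B = R - L -> A = B.
Proof. by move=> -> /eqP; rewrite subrr subr_eq0 => /eqP. Qed.

Arguments eq1' {L R A B}.

Lemma prod_cancel (q a u : C) n : q != 0 -> a != 0 -> q * (a ^+ n * u) = 0 -> u = 0.
Proof.
move=> q0 a0 /eqP; rewrite mulf_eq0 (negbTE q0) /= mulf_eq0 expf_eq0 (negbTE a0) andbF /=.
by move/eqP.
Qed.

Definition bil4 (th : nat -> nat -> C) x0 x1 x2 x3 y0 y1 y2 y3 :=
  x0 * y0 * th 1%N 1%N + x0 * y1 * th 1%N 2%N + x0 * y2 * th 1%N 3%N + x0 * y3 * th 1%N 4%N +
  x1 * y0 * th 2%N 1%N + x1 * y1 * th 2%N 2%N + x1 * y2 * th 2%N 3%N + x1 * y3 * th 2%N 4%N +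
  x2 * y0 * th 3%N 1%N + x2 * y1 * th 3%N 2%N + x2 * y2 * th 3%N 3%N + x2 * y3 * th 3%N 4%N +
  x3 * y0 * th 4%N 1%N + x3 * y1 * th 4%N 2%N + x3 * y2 * th 4%N 3%N + x3 * y3 * th 4%N 4%N.

Lemma amul_r4 th x0 x1 x2 x3 y0 y1 y2 y3 :
  amul (Ext th) (r4 x0 x1 x2 x3) (r4 y0 y1 y2 y3) =
  r4 0 (x0 * y0) (x1 * y0) (bil4 th x0 x1 x2 x3 y0 y1 y2 y3).
Proof.
rewrite amul_Ext /bil !sum4 !r4E; congr r4.
rewrite /bil4; cbn [nat_of_ord o0 o1 o2 o3]; ring.
Qed.

Ltac inst H x y h :=
  have h := H x y; rewrite !mulr4g !amul_r4 !r4E in h; move/r4_inv: h => h.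

Lemma iso_inv' th u : nf th -> nf u -> th 1%N 1%N = 0 -> th 2%N 1%N = 0 -> annP u ->
  alg_iso (Ext th) (Ext u) ->
  exists a b c lam, [/\ a != 0, lam != 0 & Eqs a b c lam th u].
Proof.
move=> nt nu t11 t21 au [P [Pu H]].
have [n1 n1'] := nt 1%N; have [n2 n2'] := nt 2%N; have [n3 n3'] := nt 3%N; have [n4 n4'] := nt 4%N.
have [m1 m1'] := nu 1%N; have [m2 m2'] := nu 2%N; have [m3 m3'] := nu 3%N; have [m4 m4'] := nu 4%N.
inst H (r4 1 0 0 0) (r4 1 0 0 0) h11.
inst H (r4 0 1 0 0) (r4 1 0 0 0) h21.
inst H (r4 0 0 0 1) (r4 0 0 0 1) h44.
inst H (r4 0 0 0 1) (r4 1 0 0 0) h41.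
inst H (r4 0 0 0 1) (r4 0 1 0 0) h42.
inst H (r4 0 0 0 1) (r4 0 0 1 0) h43.
inst H (r4 1 0 0 0) (r4 0 0 0 1) h14.
inst H (r4 0 1 0 0) (r4 0 0 0 1) h24.
inst H (r4 0 0 1 0) (r4 0 0 0 1) h34.
inst H (r4 1 0 0 0) (r4 0 1 0 0) h12.
inst H (r4 1 0 0 0) (r4 0 0 1 0) h13.
inst H (r4 0 1 0 0) (r4 0 1 0 0) h22.
inst H (r4 0 1 0 0) (r4 0 0 1 0) h23.
inst H (r4 0 0 1 0) (r4 1 0 0 0) h31.
inst H (r4 0 0 1 0) (r4 0 1 0 0) h32.
inst H (r4 0 0 1 0) (r4 0 0 1 0) h33.
case: h11 => h11_0 h11_1 h11_2 _.
case: h21 => h21_0 h21_1 h21_2 _.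
case: h44 => _ h44_1 _ _.
case: h41 => _ _ h41_2 h41_3.
case: h42 => _ _ _ h42_3.
case: h43 => _ _ _ h43_3.
case: h14 => _ _ _ h14_3.
case: h24 => _ _ _ h24_3.
case: h34 => _ _ _ h34_3.
have f10 : P o1 o0 = 0 by apply: (eq1 h11_0); rewrite /bil4 t11; ring.
have f11 : P o1 o1 = P o0 o0 ^+ 2 by apply: (eq1 h11_1); rewrite /bil4 t11; ring.
have f12 : P o1 o2 = P o0 o1 * P o0 o0 by apply: (eq1 h11_2); rewrite /bil4 t11; ring.
have f20 : P o2 o0 = 0 by apply: (eq1 h21_0); rewrite /bil4 t21; ring.
have f21 : P o2 o1 = 0 by apply: (eq1 h21_1); rewrite /bil4 t21 f10; ring.
have f22 : P o2 o2 = P o0 o0 ^+ 3 by apply: (eq1 h21_2); rewrite /bil4 t21 f11; ring.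
have f30 : P o3 o0 = 0.
  have : P o3 o0 * P o3 o0 = 0 by apply: (eq1' h44_1); rewrite /bil4 n4; ring.
  by move/eqP; rewrite mulf_eq0 orbb => /eqP.
have a0 : P o0 o0 != 0.
  apply/negP => /eqP a0; apply: (@col_unit P o0 Pu); apply: ord4P => //.
have f31 : P o3 o1 = 0.
  have : P o3 o1 * P o0 o0 = 0 by apply: (eq1' h41_2); rewrite /bil4 n1 f30; ring.
  by move/eqP; rewrite mulf_eq0 (negbTE a0) orbF => /eqP.
have f32 : P o3 o2 = 0.
  apply/eqP/negPn/negP => q0; apply: au.
  have u33 : u 3%N 3%N = 0.
    have : P o3 o2 * (P o0 o0 ^+ 3 * u 3%N 3%N) = 0.
      by apply: (eq1' h43_3); rewrite /bil4 n3 f30 f31 f20 f21 f22 m1 m2 m3 m4 m1' m2' m3'; ring.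
    exact: prod_cancel.
  have u32 : u 3%N 2%N = 0.
    have : P o3 o2 * (P o0 o0 ^+ 2 * u 3%N 2%N) = 0.
      by apply: (eq1' h42_3); rewrite /bil4 n2 f30 f31 f10 f11 f12 u33 m1 m2 m3 m4 m1' m2' m3'; ring.
    exact: prod_cancel.
  have u31 : u 3%N 1%N = 0.
    have : P o3 o2 * (P o0 o0 ^+ 1 * u 3%N 1%N) = 0.
      by apply: (eq1' h41_3); rewrite /bil4 n1 f30 f31 u33 u32 m1 m2 m3 m4 m1' m2' m3'; ring.
    exact: prod_cancel.
  have u23 : u 2%N 3%N = 0.
    have : P o3 o2 * (P o0 o0 ^+ 2 * u 2%N 3%N) = 0.
      by apply: (eq1' h24_3); rewrite /bil4 n2' f30 f31 f10 f11 f12 u33 m1 m2 m3 m4 m1' m2' m3'; ring.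
    exact: prod_cancel.
  have u13 : u 1%N 3%N = 0.
    have : P o3 o2 * (P o0 o0 ^+ 1 * u 1%N 3%N) = 0.
      by apply: (eq1' h14_3); rewrite /bil4 n1' f30 f31 u33 u23 m1 m2 m3 m4 m1' m2' m3'; ring.
    exact: prod_cancel.
  by split.
have l0 : P o3 o3 != 0.
  apply/negP => /eqP l0; apply: (@row_unit P o3 Pu); apply: ord4P => //.
exists (P o0 o0), (P o0 o1), (P o0 o2), (P o3 o3); split => //.
case: h12 => _ _ _ h12_3; case: h13 => _ _ _ h13_3; case: h22 => _ _ _ h22_3.
case: h23 => _ _ _ h23_3; case: h31 => _ _ _ h31_3; case: h32 => _ _ _ h32_3.
case: h33 => _ _ _ h33_3.
split; [ | | | | split ].
- apply: (eq1 h12_3); rewrite /bil4 f10 f11 f12 f20 f21 f22 f30 f31 f32 m1 m2 m3 m4 m1' m2' m3' n1 n2 n3 n4 n1' n2' n3'; ring.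
- apply: (eq1 h13_3); rewrite /bil4 f10 f11 f12 f20 f21 f22 f30 f31 f32 m1 m2 m3 m4 m1' m2' m3' n1 n2 n3 n4 n1' n2' n3'; ring.
- apply: (eq1 h22_3); rewrite /bil4 f10 f11 f12 f20 f21 f22 f30 f31 f32 m1 m2 m3 m4 m1' m2' m3' n1 n2 n3 n4 n1' n2' n3'; ring.
- apply: (eq1 h23_3); rewrite /bil4 f10 f11 f12 f20 f21 f22 f30 f31 f32 m1 m2 m3 m4 m1' m2' m3' n1 n2 n3 n4 n1' n2' n3'; ring.
- apply: (eq1 h31_3); rewrite /bil4 f10 f11 f12 f20 f21 f22 f30 f31 f32 m1 m2 m3 m4 m1' m2' m3' n1 n2 n3 n4 n1' n2' n3'; ring.
- apply: (eq1 h32_3); rewrite /bil4 f10 f11 f12 f20 f21 f22 f30 f31 f32 m1 m2 m3 m4 m1' m2' m3' n1 n2 n3 n4 n1' n2' n3'; ring.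
- apply: (eq1 h33_3); rewrite /bil4 f10 f11 f12 f20 f21 f22 f30 f31 f32 m1 m2 m3 m4 m1' m2' m3' n1 n2 n3 n4 n1' n2' n3'; ring.
Qed.


Lemma cancel_pow (a X : C) n : a != 0 -> a ^+ n * X = 0 -> X = 0.
Proof. by move=> a0 /eqP; rewrite mulf_eq0 expf_eq0 (negbTE a0) andbF /= => /eqP. Qed.

Lemma sub0 (x y : C) : x - y = 0 -> x = y.
Proof. by move/eqP; rewrite subr_eq0 => /eqP. Qed.

Lemma EqsA a b c lam t u : Eqs a b c lam t u -> a != 0 -> lam != 0 ->
  t 3%N 3%N = 1 -> u 3%N 3%N = 1 -> t 1%N 3%N = 0 -> u 1%N 3%N = 0 ->
  t 3%N 2%N = 0 -> u 3%N 2%N = 0 ->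
  [/\ u 2%N 3%N = a * t 2%N 3%N, u 3%N 1%N = a^+2 * t 3%N 1%N,
      u 2%N 2%N = a^+2 * t 2%N 2%N & u 1%N 2%N = a^+3 * t 1%N 2%N].
Proof.
move=> [E12 E13 E22 E23 [E31 E32 E33]] a0 l0 t33 u33 t13 u13 t32 u32.
have hl : lam = a ^+ 6 by move: E33; rewrite t33 u33 !mulr1.
have hb : b = 0.
  apply: (@cancel_pow a _ 4 a0); move: E32; rewrite t32 u32 u33 => E.
  by apply: (eq1' E); ring.
have hc : c = 0.
  apply: (@cancel_pow a _ 3 a0); move: E13; rewrite t13 u13 u33 hb => E.
  by apply: (eq1' E); ring.
rewrite hl hb hc in E12 E22 E23 E31.
split; apply: sub0.
- by apply: (@cancel_pow a _ 5 a0); apply: (eq1' E23); rewrite u33; ring.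
- by apply: (@cancel_pow a _ 4 a0); apply: (eq1' E31); rewrite u33 u32; ring.
- by apply: (@cancel_pow a _ 4 a0); apply: (eq1' E22); rewrite u33 u32; ring.
- by apply: (@cancel_pow a _ 3 a0); apply: (eq1' E12); rewrite u33 u32 u13; ring.
Qed.


Lemma EqsB a b c lam t u : Eqs a b c lam t u -> a != 0 -> lam != 0 ->
  t 3%N 3%N = 0 -> u 3%N 3%N = 0 -> t 3%N 2%N = 1 -> u 3%N 2%N = 1 ->
  exists k, [/\ u 2%N 3%N = t 2%N 3%N, u 1%N 3%N = a * t 1%N 3%N - k * u 2%N 3%N,
      u 2%N 2%N = a * t 2%N 2%N - k * (u 2%N 3%N + 1) & u 3%N 1%N = a * t 3%N 1%N - k].
Proof.
move=> [E12 E13 E22 E23 [E31 E32 E33]] a0 l0 t33 u33 t32 u32.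
have hl : lam = a ^+ 5 by move: E32; rewrite t32 u32 u33 !mulr1 mulr0 addr0.
rewrite hl in E13 E22 E23 E31.
exists (b / a); split; apply: sub0.
- by apply: (@cancel_pow a _ 5 a0); apply: (eq1' E23); rewrite u33; ring.
- apply: (@cancel_pow a _ 4 a0); apply: (eq1' E13); rewrite u33; field; done.
- apply: (@cancel_pow a _ 4 a0); apply: (eq1' E22); rewrite u33 u32; field; done.
- apply: (@cancel_pow a _ 4 a0); apply: (eq1' E31); rewrite u33 u32; field; done.
Qed.

Lemma EqsC a b c lam t u : Eqs a b c lam t u -> a != 0 -> lam != 0 ->
  t 3%N 3%N = 0 -> u 3%N 3%N = 0 -> t 3%N 2%N = 0 -> u 3%N 2%N = 0 ->
  t 2%N 3%N = 1 -> u 2%N 3%N = 1 -> t 1%N 3%N = 0 -> u 1%N 3%N = 0 ->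
  [/\ u 3%N 1%N = a * t 3%N 1%N, u 2%N 2%N = a * t 2%N 2%N & u 1%N 2%N = a^+2 * t 1%N 2%N].
Proof.
move=> [E12 E13 E22 E23 [E31 E32 E33]] a0 l0 t33 u33 t32 u32 t23 u23 t13 u13.
have hl : lam = a ^+ 5 by move: E23; rewrite t23 u23 u33 !mulr1 mulr0 addr0.
have hb : b = 0.
  apply: (@cancel_pow a _ 3 a0); move: E13; rewrite t13 u13 u33 u23 => E.
  by apply: (eq1' E); ring.
rewrite hl hb in E12 E22 E31.
split; apply: sub0.
- by apply: (@cancel_pow a _ 4 a0); apply: (eq1' E31); rewrite u33 u32; ring.
- by apply: (@cancel_pow a _ 4 a0); apply: (eq1' E22); rewrite u33 u32; ring.
- by apply: (@cancel_pow a _ 3 a0); apply: (eq1' E12); rewrite u33 u32 u13; ring.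
Qed.

Lemma EqsD a b c lam t u : Eqs a b c lam t u -> a != 0 -> lam != 0 ->
  t 3%N 3%N = 0 -> u 3%N 3%N = 0 -> t 3%N 2%N = 0 -> u 3%N 2%N = 0 ->
  t 2%N 3%N = 0 -> u 2%N 3%N = 0 ->
  t 3%N 1%N + 2 * t 1%N 3%N = 1 -> u 3%N 1%N + 2 * u 1%N 3%N = 1 ->
  [/\ u 1%N 3%N = t 1%N 3%N, u 2%N 2%N = t 2%N 2%N, u 3%N 1%N = t 3%N 1%N &
      a ^+ 4 * t 1%N 2%N = a ^+ 3 * u 1%N 2%N + a ^+ 2 * b * (u 1%N 3%N + u 2%N 2%N)].
Proof.
move=> [E12 E13 E22 E23 [E31 E32 E33]] a0 l0 t33 u33 t32 u32 t23 u23 tt uu.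
have hl : lam = a ^+ 4.
  transitivity (lam * (t 3%N 1%N + 2 * t 1%N 3%N)); first by rewrite tt mulr1.
  transitivity (lam * t 3%N 1%N + 2 * (lam * t 1%N 3%N)); first ring.
  rewrite E31 E13 u33 u32 u23.
  transitivity (a ^+ 4 * (u 3%N 1%N + 2 * u 1%N 3%N)); first ring.
  by rewrite uu mulr1.
rewrite hl in E12 E13 E22 E31.
split.
- apply: sub0; apply: (@cancel_pow a _ 4 a0); apply: (eq1' E13); rewrite u33 u23; ring.
- apply: sub0; apply: (@cancel_pow a _ 4 a0); apply: (eq1' E22); rewrite u33 u23 u32; ring.
- apply: sub0; apply: (@cancel_pow a _ 4 a0); apply: (eq1' E31); rewrite u33 u32; ring.
- apply: (eq1 E12); rewrite u33 u23 u32; ring.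
Qed.

Definition gth (t : nat -> nat -> C) : nat :=
  if t 3%N 3%N != 0 then 0 else if t 3%N 2%N != 0 then 1 else if t 2%N 3%N != 0 then 2 else 3.

Lemma scale_nz (lam k x y : C) : lam != 0 -> k != 0 -> lam * x = k * y -> (x != 0) = (y != 0).
Proof.
move=> l0 k0 E; apply/idP/idP => h.
- have : lam * x != 0 by rewrite mulf_neq0.
  by rewrite E mulf_eq0 negb_or => /andP [].
- have : k * y != 0 by rewrite mulf_neq0.
  by rewrite -E mulf_eq0 negb_or => /andP [].
Qed.

Arguments scale_nz {lam k x y}.

Lemma gth_eq a b c lam t u : Eqs a b c lam t u -> a != 0 -> lam != 0 -> gth t = gth u.
Proof.
move=> [E12 E13 E22 E23 [E31 E32 E33]] a0 l0; rewrite /gth.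
have ha : forall n, a ^+ n != 0 by move=> n; rewrite expf_eq0 (negbTE a0) andbF.
rewrite (scale_nz l0 (ha 6%N) E33); case: ifP => // /negbFE/eqP u33.
rewrite u33 !mulr0 !addr0 in E32 E23.
rewrite (scale_nz l0 (ha 5%N) E32); case: ifP => // _.
by rewrite (scale_nz l0 (ha 5%N) E23).
Qed.

Definition grp (l : Nlab) : nat :=
  match l with
  | N28 _ _ _ | N29 _ _ | N31 _ | N33 | N41 => 0
  | N35 _ | N36 _ _ | N37 _ | N38 | N40 _ => 1
  | N27 _ _ | N30 _ | N32 | N39 => 2
  | N26 _ | N34 _ _ => 3
  end.

Lemma gth_N l : gth (Ncoef l) = grp l.
Proof. by case: l => *; rewrite /gth /= ?oner_eq0 ?eqxx. Qed.

Definition concl (l l' : Nlab) : Prop :=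
  l = l' \/ (exists a b : C, l = N29 a b /\ l' = N29 (- a) b)
        \/ (exists a : C, l = N31 a /\ l' = N31 (- a)).

Definition Eqx (l l' : Nlab) : Prop :=
  exists a b c lam, [/\ a != 0, lam != 0 & Eqs a b c lam (Ncoef l) (Ncoef l')].

Lemma grp_eq l l' : Eqx l l' -> grp l = grp l'.
Proof. by case=> [a [b [c [lam [a0 l0 E]]]]]; rewrite -!gth_N; exact: gth_eq E a0 l0. Qed.


Arguments EqsA {a b c lam t u}.
Arguments EqsB {a b c lam t u}.
Arguments EqsC {a b c lam t u}.
Arguments EqsD {a b c lam t u}.

Lemma comb1 (c1 L1 R1 A B : C) : L1 = R1 -> A - B = c1 * (L1 - R1) -> A = B.
Proof. by move=> -> h; apply/eqP; rewrite -subr_eq0 h subrr mulr0. Qed.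
Lemma comb2 (c1 c2 L1 R1 L2 R2 A B : C) : L1 = R1 -> L2 = R2 ->
  A - B = c1 * (L1 - R1) + c2 * (L2 - R2) -> A = B.
Proof. by move=> -> -> h; apply/eqP; rewrite -subr_eq0 h !subrr !mulr0 addr0. Qed.
Lemma comb3 (c1 c2 c3 L1 R1 L2 R2 L3 R3 A B : C) : L1 = R1 -> L2 = R2 -> L3 = R3 ->
  A - B = c1 * (L1 - R1) + c2 * (L2 - R2) + c3 * (L3 - R3) -> A = B.
Proof. by move=> -> -> -> h; apply/eqP; rewrite -subr_eq0 h !subrr !mulr0 !addr0. Qed.
Arguments comb1 c1 {L1 R1 A B}.
Arguments comb2 c1 c2 {L1 R1 L2 R2 A B}.
Arguments comb3 c1 c2 c3 {L1 R1 L2 R2 L3 R3 A B}.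

Lemma one_neq0 : (1 : C) = 0 -> False.
Proof. by move/eqP; rewrite oner_eq0. Qed.

Lemma mul_cancel (k y : C) : y != 0 -> k * y = 0 -> k = 0.
Proof. by move=> y0 /eqP; rewrite mulf_eq0 (negbTE y0) orbF => /eqP. Qed.

Arguments mul_cancel {k y}.

Ltac kz a0 := exfalso; match goal with H : _ = _ |- _ =>
  have := congr1 (fun z : C => z == 0) H;
  rewrite ?mulr0 ?mul0r ?mulr1 ?mul1r ?mulf_eq0 ?expf_eq0 ?oner_eq0 ?eqxx ?(negbTE a0) ?andbF ?orbF /=;
  by [] end.

Lemma pairA l l' : grp l = 0%N -> grp l' = 0%N -> Eqx l l' -> concl l l'.
Proof.
move=> gl gl' [a [b [c [lam [a0 l0 E]]]]].
have hA : forall m, grp m = 0%N -> [/\ Ncoef m 3 3 = 1, Ncoef m 1 3 = 0 & Ncoef m 3 2 = 0] by case.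
have [t1 t2 t3] := hA l gl; have [u1 u2 u3] := hA l' gl'.
have [h23 h31 h22 h12] := EqsA E a0 l0 t1 u1 t2 u2 t3 u3.
clear E t1 t2 t3 u1 u2 u3 hA.
case: l gl h23 h31 h22 h12 => // [x y z|x y|x||] _; case: l' gl' => // [x' y' z'|x' y'|x'||] _ /= h23 h31 h22 h12.
all: try (kz a0).
- have ha : a = 1 by move: h23; rewrite mulr1 => ->.
  by left; rewrite h31 h22 h12 ha !expr1n !mul1r.
- have : a ^+ 2 = 1 by move: h31; rewrite mulr1 => ->.
  move/eqP; rewrite sqrf_eq1 => /orP [] /eqP ha; rewrite ha in h22 h12.
    by left; rewrite h22 h12 !expr1n !mul1r.
  right; left; exists x, y; split => //.
  by rewrite h22 h12 sqrrN expr1n mul1r -signr_odd /= expr1 mulN1r.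
- have : a ^+ 2 = 1 by move: h22; rewrite mulr1 => ->.
  move/eqP; rewrite sqrf_eq1 => /orP [] /eqP ha; rewrite ha in h12.
    by left; rewrite h12 !expr1n !mul1r.
  right; right; exists x; split => //.
  by rewrite h12 -signr_odd /= expr1 mulN1r.
- by left.
- by left.
Qed.

Lemma pairC l l' : grp l = 2%N -> grp l' = 2%N -> Eqx l l' -> concl l l'.
Proof.
move=> gl gl' [a [b [c [lam [a0 l0 E]]]]].
have hC : forall m, grp m = 2%N -> [/\ Ncoef m 3 3 = 0, Ncoef m 3 2 = 0, Ncoef m 2 3 = 1
   & Ncoef m 1 3 = 0] by case.
have [t1 t2 t3 t4] := hC l gl; have [u1 u2 u3 u4] := hC l' gl'.
have [h31 h22 h12] := EqsC E a0 l0 t1 u1 t2 u2 t3 u3 t4 u4.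
clear E t1 t2 t3 t4 u1 u2 u3 u4 hC.
case: l gl h31 h22 h12 => // [x y|x||] _; case: l' gl' => // [x' y'|x'||] _ /= h31 h22 h12.
all: try (kz a0).
- have ha : a = 1 by move: h31; rewrite mulr1 => ->.
  by left; rewrite h22 h12 ha !expr1n !mul1r.
- have ha : a = 1 by move: h22; rewrite mulr1 => ->.
  by left; rewrite h12 ha !expr1n !mul1r.
- by left.
- by left.
Qed.

Lemma pairD l l' : grp l = 3%N -> grp l' = 3%N -> Eqx l l' -> concl l l'.
Proof.
move=> gl gl' [a [b [c [lam [a0 l0 E]]]]].
have hD : forall m, grp m = 3%N -> [/\ Ncoef m 3 3 = 0, Ncoef m 3 2 = 0, Ncoef m 2 3 = 0
   & Ncoef m 3 1 + 2 * Ncoef m 1 3 = 1].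
  by case => // *; cbn [Ncoef]; split => //; ring.
have [t1 t2 t3 t4] := hD l gl; have [u1 u2 u3 u4] := hD l' gl'.
have [h13 h22 h31 h12] := EqsD E a0 l0 t1 u1 t2 u2 t3 u3 t4 u4.
clear E t1 t2 t3 t4 u1 u2 u3 u4 hD.
case: l gl h13 h22 h31 h12 => // [x|x y] _; case: l' gl' => // [x'|x' y'] _ /= h13 h22 h31 h12.
- by left; rewrite h22.
- exfalso; have : a ^+ 4 * 1 = 0 by apply: (eq1 h12); rewrite h13 h22; ring.
  by move/cancel_pow => /(_ a0) /eqP; rewrite oner_eq0.
- exfalso; have : a ^+ 3 * 1 = 0 by apply: (eq1' h12); rewrite h22; ring.
  by move/cancel_pow => /(_ a0) /eqP; rewrite oner_eq0.
- by left; rewrite h13 h22.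
Qed.

Lemma pairB l l' : Nadm l -> Nadm l' -> grp l = 1%N -> grp l' = 1%N -> Eqx l l' -> concl l l'.
Proof.
move=> al al' gl gl' [a [b [c [lam [a0 l0 E]]]]].
have hB : forall m, grp m = 1%N -> Ncoef m 3 3 = 0 /\ Ncoef m 3 2 = 1 by case.
have [t1 t2] := hB l gl; have [u1 u2] := hB l' gl'.
have [k [h23 h13 h22 h31]] := EqsB E a0 l0 t1 u1 t2 u2.
clear E t1 t2 u1 u2 hB.
case: l al gl h23 h13 h22 h31 => // [x|x y|x||x] al _;
  case: l' al' gl' => // [x'|x' y'|x'||x'] al' _; cbn [Ncoef] => h23 h13 h22 h31.
all: rewrite /Nadm in al al'.
- have hk : k = 0 by apply: (comb2 1 2 h31 h13); ring.
  have ha : a = 1 by rewrite hk in h22; apply: (comb1 (-1) h22); ring.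
  by left; rewrite h13 hk ha; congr N35; ring.
- by rewrite h23 eqxx in al'.
- by rewrite h23 eqxx in al'.
- have hk : k = 0 by apply: (comb2 1 2 h31 h13); ring.
  have ha : a = 0 by rewrite hk in h22; apply: (comb1 (-1) h22); ring.
  by rewrite ha eqxx in a0.
- rewrite h23 in h13 h22.
  have ha : a = 0 by apply: (comb3 2 (-1) 1 h13 h22 h31); ring.
  by rewrite ha eqxx in a0.
- by rewrite -h23 eqxx in al.
- have hk : k = 0 by apply: (mul_cancel al'); apply: (comb1 1 h13); ring.
  have ha : a = 1 by rewrite hk in h31; apply: (comb1 (-1) h31); ring.
  by left; rewrite h23 h22 hk ha; congr N36; ring.
- have hk : k = 0 by apply: (mul_cancel al'); apply: (comb1 1 h13); ring.
  have ha : a = 0 by rewrite hk in h31; apply: (comb1 (-1) h31); ring.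
  by rewrite ha eqxx in a0.
- by rewrite -h23 eqxx in al.
- have x0 : x' != 0 by rewrite h23.
  have hk : k = 0 by apply: (mul_cancel x0); apply: (comb1 1 h13); ring.
  have ha : a = 0 by rewrite hk in h31; apply: (comb1 (-1) h31); ring.
  by rewrite ha eqxx in a0.
- by rewrite -h23 eqxx in al.
- have hk : k = 0 by apply: (mul_cancel al'); apply: (comb1 1 h13); ring.
  by exfalso; apply: one_neq0; rewrite hk in h31; apply: (comb1 1 h31); ring.
- by left; rewrite h23.
- by rewrite -h23 eqxx in al.
- have x0 : x' != 0 by rewrite h23.
  have hk : k = 0 by apply: (mul_cancel x0); apply: (comb1 1 h13); ring.
  have ha : a = 0 by rewrite hk in h22; apply: (comb1 (-1) h22); ring.
  by rewrite ha eqxx in a0.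
- by exfalso; apply: one_neq0; apply: (comb3 (-2) 1 (-1) h13 h22 h31); ring.
- by rewrite h23 eqxx in al'.
- by rewrite h23 eqxx in al'.
- by left.
- rewrite h23 in h13.
  have ha : a = 0 by apply: (comb1 (-1) h13); ring.
  by rewrite ha eqxx in a0.
- by exfalso; apply: one_neq0; apply: (comb3 (-2) 1 (-1) h13 h22 h31); ring.
- have hk : k = 0 by apply: (mul_cancel al'); apply: (comb1 1 h13); ring.
  by exfalso; apply: one_neq0; rewrite hk in h31; apply: (comb1 1 h31); ring.
- have hk : k = 0 by apply: (mul_cancel al'); apply: (comb1 1 h13); ring.
  by exfalso; apply: one_neq0; rewrite hk in h22; apply: (comb1 1 h22); ring.
- by exfalso; apply: one_neq0; apply: (comb1 1 h13); ring.
- by left; rewrite h23.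
Qed.


Arguments iso_inv' {th u}.

Lemma annN l : annP (Ncoef l).
Proof.
rewrite /annP; case: l => *; cbn [Ncoef]; case=> h31 h32 h33 h13 h23; apply: one_neq0 => //.
- by apply: (comb2 1 2 h31 h13); ring.
- by apply: (comb2 1 2 h31 h13); ring.
Qed.

Lemma t11N l : Ncoef l 1 1 = 0. Proof. by case: l. Qed.
Lemma t21N l : Ncoef l 2 1 = 0. Proof. by case: l. Qed.

Lemma part2_fwd l l' : Nadm l -> Nadm l' -> alg_iso (Nalg l) (Nalg l') -> concl l l'.
Proof.
move=> al al'; rewrite !NalgE => /(iso_inv' (Ncoef_nf l) (Ncoef_nf l') (t11N l) (t21N l) (annN l')) ex.
have hg := @grp_eq l l' ex.
case hl : (grp l) hg => [|[|[|[|n]]]] hg.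
- exact: pairA.
- exact: pairB.
- exact: pairC.
- exact: pairD.
- by move: hl; case: l {al ex hg}.
Qed.

Lemma fun_eq2 (f g : nat -> nat -> C) : (forall i j, f i j = g i j) -> f = g.
Proof. by move=> h; apply: functional_extensionality => i; apply: functional_extensionality. Qed.

Lemma part2_bwd l l' : concl l l' -> alg_iso (Nalg l) (Nalg l').
Proof.
case=> [-> | [[x [y [-> ->]]] | [x [-> ->]]]]; first exact: alg_iso_refl.
- rewrite !NalgE.
  have -> : Ncoef (N29 x y) = tr (-1) 0 0 1 (Ncoef (N29 (- x) y)).
    apply: fun_eq2 => i j.
    case: i => [|[|[|[|i]]]]; case: j => [|[|[|[|j]]]]; cbn [tr Ncoef]; try ring; field; done.
  apply: iso_tr; [by rewrite oppr_eq0 oner_eq0 | exact: oner_neq0 | exact: Ncoef_nf].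
- rewrite !NalgE.
  have -> : Ncoef (N31 x) = tr (-1) 0 0 1 (Ncoef (N31 (- x))).
    apply: fun_eq2 => i j.
    case: i => [|[|[|[|i]]]]; case: j => [|[|[|[|j]]]]; cbn [tr Ncoef]; try ring; field; done.
  apply: iso_tr; [by rewrite oppr_eq0 oner_eq0 | exact: oner_neq0 | exact: Ncoef_nf].
Qed.


Lemma tr_Ncoef a b c lam th l :
  tr a b c lam th 1 2 = Ncoef l 1 2 -> tr a b c lam th 1 3 = Ncoef l 1 3 ->
  tr a b c lam th 2 2 = Ncoef l 2 2 -> tr a b c lam th 2 3 = Ncoef l 2 3 ->
  tr a b c lam th 3 1 = Ncoef l 3 1 -> tr a b c lam th 3 2 = Ncoef l 3 2 ->
  tr a b c lam th 3 3 = Ncoef l 3 3 -> tr a b c lam th = Ncoef l.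
Proof.
move=> h12 h13 h22 h23 h31 h32 h33; apply: fun_eq2 => i j.
case: i => [|[|[|[|i]]]]; case: j => [|[|[|[|j]]]] //; by case: l {h12 h13 h22 h23 h31 h32 h33}.
Qed.

Lemma reach th a b c lam l : nf th -> a != 0 -> lam != 0 -> Nadm l ->
  tr a b c lam th = Ncoef l -> exists l0, Nadm l0 /\ alg_iso (Ext th) (Nalg l0).
Proof.
move=> nt a0 l0 al h; exists l; split => //; rewrite NalgE -h.
by apply: alg_iso_sym; apply: iso_tr.
Qed.

Arguments reach {th} a b c lam l.

Lemma classA th : nf th -> th 3 3 != 0 -> exists l, Nadm l /\ alg_iso (Ext th) (Nalg l).
Proof.
move=> nt h33.
case: (eqVneq (th 2 3) (th 3 2)) => [e23 | d0]; last first.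
  pose a := (th 2 3 - th 3 2) / th 3 3.
  have a0 : a != 0 by rewrite mulf_neq0 ?invr_eq0 ?subr_eq0.
  pose b := - a * th 3 2 / th 3 3.
  pose c := - (a * th 1 3 + b * th 2 3) / th 3 3.
  pose lam := a ^+ 6 * th 3 3.
  have l0 : lam != 0 by rewrite mulf_neq0 ?expf_neq0.
  apply: (reach a b c lam (N28 (tr a b c lam th 1 2) (tr a b c lam th 2 2) (tr a b c lam th 3 1))) => //.
  apply: tr_Ncoef => //; cbn [Ncoef tr]; rewrite /lam /c /b /a; field;
    by rewrite ?h33 ?subr_eq0 ?d0.
pose g := (th 3 1 - th 1 3) / th 3 3.
case: (eqVneq g 0) => [g0 | g0].
  pose h := (th 2 2 * th 3 3 - th 3 2 ^+ 2) / th 3 3 ^+ 2.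
  have e31 : th 3 1 = th 1 3.
    by apply/eqP; rewrite -subr_eq0; move/eqP: g0; rewrite /g mulf_eq0 invr_eq0 (negbTE h33) orbF.
  case: (eqVneq h 0) => [h0 | h0].
    have e22 : th 2 2 = th 3 2 ^+ 2 / th 3 3.
      move/eqP: h0; rewrite /h mulf_eq0 invr_eq0 expf_eq0 (negbTE h33) andbF orbF subr_eq0 => /eqP h0.
      by rewrite -h0; field.
    pose k := (th 1 2 - th 3 2 * th 1 3 / th 3 3) / th 3 3.
    case: (eqVneq k 0) => [k0 | k0].
      have e12 : th 1 2 = th 3 2 * th 1 3 / th 3 3.
        move/eqP: k0; rewrite /k mulf_eq0 invr_eq0 (negbTE h33) orbF subr_eq0 => /eqP k0.
        by rewrite k0.
      pose a : C := 1.
      have a0 : a != 0 by rewrite oner_eq0.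
      pose b := - a * th 3 2 / th 3 3.
      pose c := - (a * th 1 3 + b * th 2 3) / th 3 3.
      pose lam := a ^+ 6 * th 3 3.
      have l0 : lam != 0 by rewrite mulf_neq0 ?expf_neq0.
      apply: (reach a b c lam N41) => //.
      apply: tr_Ncoef => //; cbn [Ncoef tr]; rewrite /lam /c /b /a ?e12 ?e22 ?e31 ?e23; field;
        by rewrite ?h33.
    have [a ha] : exists a : C, a ^+ 3 = k by exists (3.-root k); rewrite rootCK.
    have a0 : a != 0 by apply: (contra_neq _ k0) => a0'; rewrite -ha a0'; ring.
    have e12 : th 1 2 = th 3 2 * th 1 3 / th 3 3 + a ^+ 3 * th 3 3 by rewrite ha /k; field.
    pose b := - a * th 3 2 / th 3 3.
    pose c := - (a * th 1 3 + b * th 2 3) / th 3 3.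
    pose lam := a ^+ 6 * th 3 3.
    have l0 : lam != 0 by rewrite mulf_neq0 ?expf_neq0.
    apply: (reach a b c lam N33) => //.
    apply: tr_Ncoef => //; cbn [Ncoef tr]; rewrite /lam /c /b ?e12 ?e22 ?e31 ?e23; field;
      by rewrite ?h33 ?a0.
  have [a ha] : exists a : C, a ^+ 2 = h by exists (sqrtC h); rewrite sqrtCK.
  have a0 : a != 0 by apply: (contra_neq _ h0) => a0'; rewrite -ha a0'; ring.
  have e22 : th 2 2 = (th 3 2 ^+ 2 + a ^+ 2 * th 3 3 ^+ 2) / th 3 3 by rewrite ha /h; field.
  pose b := - a * th 3 2 / th 3 3.
  pose c := - (a * th 1 3 + b * th 2 3) / th 3 3.
  pose lam := a ^+ 6 * th 3 3.
  have l0 : lam != 0 by rewrite mulf_neq0 ?expf_neq0.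
  apply: (reach a b c lam (N31 (tr a b c lam th 1 2))) => //.
  apply: tr_Ncoef => //; cbn [Ncoef tr]; rewrite /lam /c /b ?e22 ?e31 ?e23; field;
    by rewrite ?h33 ?a0.
have [a ha] : exists a : C, a ^+ 2 = g by exists (sqrtC g); rewrite sqrtCK.
have a0 : a != 0 by apply: (contra_neq _ g0) => a0'; rewrite -ha a0'; ring.
have e31 : th 3 1 = th 1 3 + a ^+ 2 * th 3 3 by rewrite ha /g; field.
pose b := - a * th 3 2 / th 3 3.
pose c := - (a * th 1 3 + b * th 2 3) / th 3 3.
pose lam := a ^+ 6 * th 3 3.
have l0 : lam != 0 by rewrite mulf_neq0 ?expf_neq0.
apply: (reach a b c lam (N29 (tr a b c lam th 1 2) (tr a b c lam th 2 2))) => //.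
apply: tr_Ncoef => //; cbn [Ncoef tr]; rewrite /lam /c /b ?e31 ?e23; field;
  by rewrite ?h33 ?a0.
Qed.

Lemma nz_scale (x q d : C) : q != 0 -> d != 0 -> x = q * d -> x != 0.
Proof. by move=> q0 d0 ->; rewrite mulf_neq0. Qed.
Arguments nz_scale {x q d}.

Lemma classB th : nf th -> th 3 3 = 0 -> th 3 2 != 0 ->
  exists l, Nadm l /\ alg_iso (Ext th) (Nalg l).
Proof.
move=> nt e33 h32.
case: (eqVneq (th 2 3) 0) => [e23 | h23].
  pose u := th 2 2 - th 3 1 - 2 * th 1 3.
  case: (eqVneq u 0) => [u0 | u0].
    have e22 : th 2 2 = th 3 1 + 2 * th 1 3.
      by apply: (comb1 1 u0); rewrite /u; ring.
    case: (eqVneq (th 1 3) 0) => [e13 | h13].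
      pose a : C := 1.
      have a0 : a != 0 by rewrite oner_eq0.
      pose b := - a * (th 3 1 + 2 * th 1 3) / th 3 2.
      pose c := - (a * th 1 2 + b * (th 1 3 + th 2 2) + b ^+ 2 * th 2 3 / a) / th 3 2.
      pose lam := a ^+ 5 * th 3 2.
      have l0 : lam != 0 by rewrite mulf_neq0 ?expf_neq0.
      apply: (reach a b c lam (N40 (tr a b c lam th 2 3))) => //.
      apply: tr_Ncoef => //; cbn [Ncoef tr]; rewrite /lam /c /b /a ?e33 ?e23 ?e22 ?e13; field;
        by rewrite ?h32.
    pose a := th 1 3 / th 3 2.
    have a0 : a != 0 by rewrite mulf_neq0 ?invr_eq0.
    pose b := - a * (th 3 1 + 2 * th 1 3) / th 3 2.
    pose c := - (a * th 1 2 + b * (th 1 3 + th 2 2) + b ^+ 2 * th 2 3 / a) / th 3 2.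
    pose lam := a ^+ 5 * th 3 2.
    have l0 : lam != 0 by rewrite mulf_neq0 ?expf_neq0.
    apply: (reach a b c lam N38) => //.
    apply: tr_Ncoef => //; cbn [Ncoef tr]; rewrite /lam /c /b /a ?e33 ?e23 ?e22; field;
      by rewrite ?h32 ?h13.
  pose a := u / th 3 2.
  have a0 : a != 0 by rewrite mulf_neq0 ?invr_eq0.
  pose b := - a * (th 3 1 + 2 * th 1 3) / th 3 2.
  pose c := - (a * th 1 2 + b * (th 1 3 + th 2 2) + b ^+ 2 * th 2 3 / a) / th 3 2.
  pose lam := a ^+ 5 * th 3 2.
  have l0 : lam != 0 by rewrite mulf_neq0 ?expf_neq0.
  apply: (reach a b c lam (N35 (tr a b c lam th 1 3))) => //.
  apply: tr_Ncoef => //; cbn [Ncoef tr]; rewrite /lam /c /b /a /u ?e33 ?e23; field;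
    by rewrite ?h32 -?/u ?u0.
pose p := th 3 1 - th 1 3 * th 3 2 / th 2 3.
have t23E : forall a b c lam, a != 0 -> lam = a ^+ 5 * th 3 2 ->
    tr a b c lam th 2 3 = th 2 3 / th 3 2.
  by move=> a b c lam a0 ->; cbn [tr]; rewrite e33; field; rewrite ?h32.
have ad : th 2 3 / th 3 2 != 0 by rewrite mulf_neq0 ?invr_eq0.
case: (eqVneq p 0) => [p0 | p0].
  have e31 : th 3 1 = th 1 3 * th 3 2 / th 2 3.
    by apply: (comb1 1 p0); rewrite /p; ring.
  pose q := th 2 2 - th 1 3 * (th 2 3 + th 3 2) / th 2 3.
  case: (eqVneq q 0) => [q0 | q0].
    have e22 : th 2 2 = th 1 3 * (th 2 3 + th 3 2) / th 2 3.
      by apply: (comb1 1 q0); rewrite /q; ring.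
    pose a : C := 1.
    have a0 : a != 0 by rewrite oner_eq0.
    pose b := - a * th 1 3 / th 2 3.
    pose c := - (a * th 1 2 + b * (th 1 3 + th 2 2) + b ^+ 2 * th 2 3 / a) / th 3 2.
    pose lam := a ^+ 5 * th 3 2.
    have l0 : lam != 0 by rewrite mulf_neq0 ?expf_neq0.
    apply: (reach a b c lam (N40 (tr a b c lam th 2 3))) => //.
    apply: tr_Ncoef => //; cbn [Ncoef tr]; rewrite /lam /c /b /a ?e33 ?e31 ?e22; field;
      by rewrite ?h32 ?h23.
  pose a := q / th 3 2.
  have a0 : a != 0 by rewrite mulf_neq0 ?invr_eq0.
  pose b := - a * th 1 3 / th 2 3.
  pose c := - (a * th 1 2 + b * (th 1 3 + th 2 2) + b ^+ 2 * th 2 3 / a) / th 3 2.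
  pose lam := a ^+ 5 * th 3 2.
  have l0 : lam != 0 by rewrite mulf_neq0 ?expf_neq0.
  apply: (reach a b c lam (N37 (tr a b c lam th 2 3))).
  - exact: nt.
  - exact: a0.
  - exact: l0.
  - by rewrite /Nadm (t23E _ _ _ _ a0).
  have q1 : th 2 2 * th 2 3 - th 1 3 * (th 2 3 + th 3 2) != 0.
    by apply: (nz_scale q0 h23); rewrite /q; field.
  apply: tr_Ncoef => //; cbn [Ncoef tr]; rewrite /lam /c /b /a /q ?e33 ?e31; field;
    by rewrite ?h32 ?h23 ?q1.
pose a := p / th 3 2.
have a0 : a != 0 by rewrite mulf_neq0 ?invr_eq0.
pose b := - a * th 1 3 / th 2 3.
pose c := - (a * th 1 2 + b * (th 1 3 + th 2 2) + b ^+ 2 * th 2 3 / a) / th 3 2.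
pose lam := a ^+ 5 * th 3 2.
have l0 : lam != 0 by rewrite mulf_neq0 ?expf_neq0.
apply: (reach a b c lam (N36 (tr a b c lam th 2 2) (tr a b c lam th 2 3))).
- exact: nt.
- exact: a0.
- exact: l0.
- by rewrite /Nadm (t23E _ _ _ _ a0).
have p1 : th 3 1 * th 2 3 - th 1 3 * th 3 2 != 0.
  by apply: (nz_scale p0 h23); rewrite /p; field.
apply: tr_Ncoef => //; cbn [Ncoef tr]; rewrite /lam /c /b /a /p ?e33; field;
  by rewrite ?h32 ?h23 ?p1.
Qed.

Lemma classC th : nf th -> th 3 3 = 0 -> th 3 2 = 0 -> th 2 3 != 0 ->
  exists l, Nadm l /\ alg_iso (Ext th) (Nalg l).
Proof.
move=> nt e33 e32 h23.
case: (eqVneq (th 3 1) 0) => [e31 | h31]; last first.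
  pose a := th 3 1 / th 2 3.
  have a0 : a != 0 by rewrite mulf_neq0 ?invr_eq0.
  pose b := - a * th 1 3 / th 2 3.
  pose lam := a ^+ 5 * th 2 3.
  have l0 : lam != 0 by rewrite mulf_neq0 ?expf_neq0.
  apply: (reach a b 0 lam (N27 (tr a b 0 lam th 1 2) (tr a b 0 lam th 2 2))) => //.
  apply: tr_Ncoef => //; cbn [Ncoef tr]; rewrite /lam /b /a ?e33 ?e32; field;
    by rewrite ?h23 ?h31.
pose v := th 2 2 - th 1 3.
case: (eqVneq v 0) => [v0 | v0]; last first.
  pose a := v / th 2 3.
  have a0 : a != 0 by rewrite mulf_neq0 ?invr_eq0.
  pose b := - a * th 1 3 / th 2 3.
  pose lam := a ^+ 5 * th 2 3.
  have l0 : lam != 0 by rewrite mulf_neq0 ?expf_neq0.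
  apply: (reach a b 0 lam (N30 (tr a b 0 lam th 1 2))) => //.
  apply: tr_Ncoef => //; cbn [Ncoef tr]; rewrite /lam /b /a /v ?e33 ?e32 ?e31; field;
    by rewrite ?h23 -?/v ?v0.
have e22 : th 2 2 = th 1 3 by apply: (comb1 1 v0); rewrite /v; ring.
pose w := (th 1 2 - th 1 3 ^+ 2 / th 2 3) / th 2 3.
case: (eqVneq w 0) => [w0 | w0].
  have e12 : th 1 2 = th 1 3 ^+ 2 / th 2 3.
    apply: (comb1 (th 2 3) w0); rewrite /w; field; by rewrite h23.
  pose a : C := 1.
  have a0 : a != 0 by rewrite oner_eq0.
  pose b := - a * th 1 3 / th 2 3.
  pose lam := a ^+ 5 * th 2 3.
  have l0 : lam != 0 by rewrite mulf_neq0 ?expf_neq0.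
  apply: (reach a b 0 lam N39) => //.
  apply: tr_Ncoef => //; cbn [Ncoef tr]; rewrite /lam /b /a ?e33 ?e32 ?e31 ?e22 ?e12; field;
    by rewrite ?h23.
have [a ha] : exists a : C, a ^+ 2 = w by exists (sqrtC w); rewrite sqrtCK.
have a0 : a != 0 by apply: (contra_neq _ w0) => a0'; rewrite -ha a0'; ring.
have e12 : th 1 2 = th 1 3 ^+ 2 / th 2 3 + a ^+ 2 * th 2 3 by rewrite ha /w; field.
pose b := - a * th 1 3 / th 2 3.
pose lam := a ^+ 5 * th 2 3.
have l0 : lam != 0 by rewrite mulf_neq0 ?expf_neq0.
apply: (reach a b 0 lam N32) => //.
apply: tr_Ncoef => //; cbn [Ncoef tr]; rewrite /lam /b ?e33 ?e32 ?e31 ?e22 ?e12; field;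
  by rewrite ?h23 ?a0.
Qed.

Lemma classD th : nf th -> th 3 3 = 0 -> th 3 2 = 0 -> th 2 3 = 0 ->
  th 3 1 + 2 * th 1 3 != 0 -> exists l, Nadm l /\ alg_iso (Ext th) (Nalg l).
Proof.
move=> nt e33 e32 e23 hm.
case: (eqVneq (th 1 3 + th 2 2) 0) => [s0 | s0]; last first.
  pose b := - th 1 2 / (th 1 3 + th 2 2).
  pose lam := th 3 1 + 2 * th 1 3.
  have a0 : (1 : C) != 0 by rewrite oner_eq0.
  apply: (reach 1 b 0 lam (N34 (tr 1 b 0 lam th 2 2) (tr 1 b 0 lam th 1 3))) => //.
  apply: tr_Ncoef => //; cbn [Ncoef tr]; rewrite /lam /b ?e33 ?e32 ?e23; field;
    by rewrite ?hm ?s0.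
have e22 : th 2 2 = - th 1 3 by apply: (comb1 1 s0); ring.
case: (eqVneq (th 1 2) 0) => [e12 | h12].
  pose lam := th 3 1 + 2 * th 1 3.
  have a0 : (1 : C) != 0 by rewrite oner_eq0.
  apply: (reach 1 0 0 lam (N34 (tr 1 0 0 lam th 2 2) (tr 1 0 0 lam th 1 3))) => //.
  apply: tr_Ncoef => //; cbn [Ncoef tr]; rewrite /lam ?e33 ?e32 ?e23 ?e12; field;
    by rewrite ?hm.
pose a := th 1 2 / (th 3 1 + 2 * th 1 3).
have a0 : a != 0 by rewrite mulf_neq0 ?invr_eq0.
pose lam := a ^+ 4 * (th 3 1 + 2 * th 1 3).
have l0 : lam != 0 by rewrite mulf_neq0 ?expf_neq0.
apply: (reach a 0 0 lam (N26 (tr a 0 0 lam th 2 2))) => //.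
apply: tr_Ncoef => //; cbn [Ncoef tr]; rewrite /lam /a ?e33 ?e32 ?e23 ?e22; field;
  by rewrite ?hm ?h12.
Qed.

Lemma classify th : nf th ->
  ~ (th 3 2 = 0 /\ th 3 3 = 0 /\ th 2 3 = 0 /\ th 3 1 = - (2 * th 1 3)) ->
  exists l, Nadm l /\ alg_iso (Ext th) (Nalg l).
Proof.
move=> nt ncd.
case: (eqVneq (th 3 3) 0) => [e33 | h33]; last exact: classA.
case: (eqVneq (th 3 2) 0) => [e32 | h32]; last exact: classB.
case: (eqVneq (th 2 3) 0) => [e23 | h23]; last exact: classC.
apply: classD => //; apply/eqP => hm; apply: ncd; do 3! split => //.
by apply: (comb1 1 hm); ring.
Qed.


Lemma r4D a0 a1 a2 a3 b0 b1 b2 b3 :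
  r4 a0 a1 a2 a3 + r4 b0 b1 b2 b3 = r4 (a0 + b0) (a1 + b1) (a2 + b2) (a3 + b3).
Proof. by apply/rowP; apply: ord4P; rewrite !mxE. Qed.

Lemma r4B a0 a1 a2 a3 b0 b1 b2 b3 :
  r4 a0 a1 a2 a3 - r4 b0 b1 b2 b3 = r4 (a0 - b0) (a1 - b1) (a2 - b2) (a3 - b3).
Proof. by apply/rowP; apply: ord4P; rewrite !mxE. Qed.

Lemma CD_Ext th : nf th -> th 3 2 = 0 -> th 3 3 = 0 -> th 2 3 = 0 ->
  th 3 1 = - (2 * th 1 3) -> is_CD (Ext th).
Proof.
move=> nt e32 e33 e23 e31.
have [n1 n1'] := nt 1%N; have [n2 n2'] := nt 2%N; have [n3 n3'] := nt 3%N; have [n4 n4'] := nt 4%N.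
move=> x y a b.
rewrite [x]r4_eq [y]r4_eq [a]r4_eq [b]r4_eq.
(do 4 rewrite ?amul_r4 ?r4D ?r4B).
(split; [|split]; apply: r4_inj; rewrite /bil4 ?e32 ?e33 ?e23 ?e31 ?n1 ?n1' ?n2 ?n2' ?n3 ?n3' ?n4; ring).
Qed.


Lemma amulDl (n : nat) (T : sconst n) x1 x2 y : amul T (x1 + x2) y = amul T x1 y + amul T x2 y.
Proof.
rewrite /amul -big_split; apply: eq_bigr => i _; rewrite -big_split; apply: eq_bigr => j _.
by rewrite mxE mulrDl scalerDl.
Qed.

Lemma amulZl (n : nat) (T : sconst n) c x y : amul T (c *: x) y = c *: amul T x y.
Proof.
rewrite /amul scaler_sumr; apply: eq_bigr => i _; rewrite scaler_sumr; apply: eq_bigr => j _.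
by rewrite mxE scalerA mulrA.
Qed.

Lemma amul0l (n : nat) (T : sconst n) y : amul T 0 y = 0.
Proof. by rewrite /amul big1 // => i _; rewrite big1 // => j _; rewrite mxE mul0r scale0r. Qed.

Lemma amulDr (n : nat) (T : sconst n) x y1 y2 : amul T x (y1 + y2) = amul T x y1 + amul T x y2.
Proof.
rewrite /amul -big_split; apply: eq_bigr => i _; rewrite -big_split; apply: eq_bigr => j _.
by rewrite mxE mulrDr scalerDl.
Qed.

Lemma amulZr (n : nat) (T : sconst n) c x y : amul T x (c *: y) = c *: amul T x y.
Proof.
rewrite /amul scaler_sumr; apply: eq_bigr => i _; rewrite scaler_sumr; apply: eq_bigr => j _.
by rewrite mxE scalerA mulrCA.
Qed.

Lemma amul0r (n : nat) (T : sconst n) x : amul T x 0 = 0.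
Proof. by rewrite /amul big1 // => i _; rewrite big1 // => j _; rewrite mxE mulr0 scale0r. Qed.

Lemma amul_sum (n : nat) (T : sconst n) (x y : 'rV[C]_n) (Q : 'M[C]_n) :
  amul T (x *m Q) (y *m Q) = \sum_i \sum_j (x 0 i * y 0 j) *: amul T (row i Q) (row j Q).
Proof.
rewrite [x *m Q]mulmx_sum_row.
rewrite (big_morph (fun u => amul T u (y *m Q)) (fun u v => @amulDl n T u v (y *m Q)) (@amul0l n T _)).
apply: eq_bigr => i _; rewrite amulZl [y *m Q]mulmx_sum_row.
rewrite (big_morph (fun u => amul T (row i Q) u) (fun u v => @amulDr n T (row i Q) u v) (@amul0r n T _)).
rewrite scaler_sumr; apply: eq_bigr => j _; by rewrite amulZr scalerA.
Qed.

Lemma amul_Q (n : nat) (T : sconst n) (S : sconst n) (Q : 'M[C]_n) :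
  (forall i j, S i j *m Q = amul T (row i Q) (row j Q)) ->
  forall x y, amul S x y *m Q = amul T (x *m Q) (y *m Q).
Proof.
move=> K x y; rewrite amul_sum /amul mulmx_suml; apply: eq_bigr => i _.
rewrite mulmx_suml; apply: eq_bigr => j _; by rewrite -scalemxAl K.
Qed.


Lemma CD_iso n (T1 T2 : sconst n) : alg_iso T1 T2 -> is_CD T2 -> is_CD T1.
Proof.
case=> P [Pu H] cd; rewrite /is_CD => x y a b.
have inj : forall u v : 'rV_n, u *m P = v *m P -> u = v.
  by move=> u v /(congr1 (mulmx^~ (invmx P))); rewrite !mulmxK.
have [c1 [c2 c3]] := cd (x *m P) (y *m P) (a *m P) (b *m P).
split; [|split]; apply: inj; do 4 rewrite ?mulmxBl ?mulmxDl ?H.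
- exact: c1.
- exact: c2.
- exact: c3.
Qed.


Definition p0 : 'I_3 := @Ordinal 3 0 isT.
Definition p1 : 'I_3 := @Ordinal 3 1 isT.
Definition p2 : 'I_3 := @Ordinal 3 2 isT.

Lemma ord3P (P : 'I_3 -> Prop) : P p0 -> P p1 -> P p2 -> forall k, P k.
Proof.
move=> h0 h1 h2 [[|[|[|k]]] Hk] //.
- by have -> : Ordinal Hk = p0 by exact: val_inj.
- by have -> : Ordinal Hk = p1 by exact: val_inj.
- by have -> : Ordinal Hk = p2 by exact: val_inj.
Qed.

Lemma sum3 (F : 'I_3 -> C) : \sum_(i < 3) F i = F p0 + F p1 + F p2.
Proof.
rewrite !big_ord_recl big_ord0 addr0 !addrA.
congr (F _ + F _ + F _); exact: val_inj.
Qed.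

Lemma sum4g (V : nmodType) (F : 'I_4 -> V) : \sum_(i < 4) F i = F o0 + F o1 + F o2 + F o3.
Proof.
rewrite !big_ord_recl big_ord0 addr0 !addrA.
congr (F _ + F _ + F _ + F _); exact: val_inj.
Qed.

Definition r3 (c0 c1 c2 : C) : 'rV[C]_3 := \row_(k < 3) nth 0 [:: c0; c1; c2] k.

Lemma r3E c0 c1 c2 :
  ((r3 c0 c1 c2) 0 p0 = c0) * ((r3 c0 c1 c2) 0 p1 = c1) * ((r3 c0 c1 c2) 0 p2 = c2).
Proof. by rewrite !mxE. Qed.

Lemma r3_inj a0 a1 a2 b0 b1 b2 : a0 = b0 -> a1 = b1 -> a2 = b2 -> r3 a0 a1 a2 = r3 b0 b1 b2.
Proof. by move=> -> -> ->. Qed.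

Lemma r3_inv a0 a1 a2 b0 b1 b2 :
  r3 a0 a1 a2 = r3 b0 b1 b2 -> [/\ a0 = b0, a1 = b1 & a2 = b2].
Proof.
move=> h; have := congr1 (fun v : 'rV[C]_3 => (v 0 p0, v 0 p1, v 0 p2)) h.
by rewrite !r3E => -[].
Qed.

Lemma eq_inord3 (k : 'I_3) n : (n < 3)%N -> (k == inord n) = ((k : nat) == n).
Proof. by move=> hn; rewrite -val_eqE /= inordK. Qed.

Lemma CDE (i j k : 'I_3) : CD3_03 i j 0 k =
  (if Nat.eqb i 0 && Nat.eqb j 0 && Nat.eqb k 1 then 1 else 0) +
  (if Nat.eqb i 1 && Nat.eqb j 0 && Nat.eqb k 2 then 1 else 0).
Proof.
case: i => [[|[|[|i]]] Hi] //; case: j => [[|[|[|j]]] Hj] //=;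
  rewrite /CD3_03 /= ?mxE ?eq_inord3 // ?eqnb;
  by case: (Nat.eqb k 1); case: (Nat.eqb k 2); rewrite ?add0r ?addr0.
Qed.

Lemma amul_CD x y : amul CD3_03 x y = r3 0 (x 0 p0 * y 0 p0) (x 0 p1 * y 0 p0).
Proof.
apply/rowP; apply: ord3P; rewrite amulE;
  under eq_bigr => i _ do under eq_bigr => j _ do rewrite CDE;
  rewrite !sum3; cbn [Nat.eqb andb nat_of_ord p0 p1 p2]; rewrite !mxE; cbn [nth nat_of_ord p0 p1 p2]; ring.
Qed.

Lemma mulr3 (v : 'rV[C]_4) (Q : 'M[C]_(4,3)) :
  v *m Q = \sum_(i < 4) v 0 i *: row i Q.
Proof. exact: mulmx_sum_row. Qed.

Lemma r3_0 : r3 0 0 0 = 0.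
Proof. by apply/rowP; apply: ord3P; rewrite !mxE. Qed.

Lemma r3D a0 a1 a2 b0 b1 b2 : r3 a0 a1 a2 + r3 b0 b1 b2 = r3 (a0 + b0) (a1 + b1) (a2 + b2).
Proof. by apply/rowP; apply: ord3P; rewrite !mxE. Qed.

Lemma r3Z c a0 a1 a2 : c *: r3 a0 a1 a2 = r3 (c * a0) (c * a1) (c * a2).
Proof. by apply/rowP; apply: ord3P; rewrite !mxE. Qed.

Lemma r4_0 : r4 0 0 0 0 = 0.
Proof. by apply/rowP; apply: ord4P; rewrite !mxE. Qed.


Lemma part1 T : ann_dim1 T -> quot_ann_iso T CD3_03 -> ~ is_CD T ->
  exists l, Nadm l /\ alg_iso T (Nalg l).
Proof.
case=> av [av0 hav]; case=> f [ff [fh fk]] ncd.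
have avann : in_ann T av by apply/hav; exists 1; rewrite scale1r.
have avf : av *m f = 0 by apply/fk.
have [E1 hE1] : exists E1 : 'rV[C]_4, E1 *m f = r3 1 0 0.
  by case/submxP: (submx_full (r3 1 0 0) ff) => D hD; exists D; rewrite hD.
pose E2 := amul T E1 E1.
pose E3 := amul T E2 E1.
have hE2 : E2 *m f = r3 0 1 0 by rewrite /E2 fh hE1 amul_CD !r3E; apply: r3_inj; ring.
have hE3 : E3 *m f = r3 0 0 1 by rewrite /E3 fh hE2 hE1 amul_CD !r3E; apply: r3_inj; ring.
pose Q : 'M[C]_4 := \matrix_(i < 4) nth 0 [:: E1; E2; E3; av] i.
have rQ : forall i : 'I_4, row i Q = nth 0 [:: E1; E2; E3; av] i by move=> i; rewrite rowK.
have rf : forall i : 'I_4, row i Q *m f =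
    r3 (if Nat.eqb i 0 then 1 else 0) (if Nat.eqb i 1 then 1 else 0) (if Nat.eqb i 2 then 1 else 0).
  apply: ord4P; rewrite rQ; cbn [nth nat_of_ord o0 o1 o2 o3 Nat.eqb] => //.
  by rewrite avf r3_0.
have Qf : forall w : 'rV[C]_4, w *m (Q *m f) = r3 (w 0 o0) (w 0 o1) (w 0 o2).
  move=> w; rewrite mulmx_sum_row sum4g !row_mul !rf; cbn [nat_of_ord o0 o1 o2 o3 Nat.eqb].
  rewrite !r3Z !r3D; apply: r3_inj; ring.
have Qu : Q \in unitmx.
  apply: inj_unit => v hv.
  have := congr1 (mulmx^~ f) hv; rewrite -mulmxA Qf mul0mx -r3_0 => /r3_inv [v0 v1 v2].
  move: hv; rewrite mulmx_sum_row sum4g !rQ; cbn [nth nat_of_ord o0 o1 o2 o3].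
  rewrite v0 v1 v2 !scale0r !add0r => /eqP; rewrite scaler_eq0 (negbTE av0) orbF => /eqP v3.
  by rewrite [v]r4_eq v0 v1 v2 v3 r4_0.
pose th := fun i j : nat => if ((0 < i <= 4) && (0 < j <= 4))%N then
  (amul T (row (inord i.-1) Q) (row (inord j.-1) Q) *m invmx Q) 0 o3 else 0.
have h3 : (inord 3 : 'I_4) = o3 by apply: val_inj; rewrite /= inordK.
have rQ3 : row (inord 3) Q = av by rewrite h3 rQ.
have nt : nf th.
  move=> k; rewrite /th; split; case: ifP => // _.
  - by rewrite rQ3 (avann _).1 mul0mx mxE.
  - by rewrite rQ3 (avann _).2 mul0mx mxE.
have KEY : forall i j : 'I_4, Ext th i j *m Q = amul T (row i Q) (row j Q).
  move=> i j; set w := amul T (row i Q) (row j Q) *m invmx Q.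
  suff -> : Ext th i j = w by rewrite /w mulmxKV.
  have hw : w *m (Q *m f) = amul CD3_03 (row i Q *m f) (row j Q *m f).
    by rewrite mulmxA /w mulmxKV // fh.
  rewrite Qf !rf amul_CD !r3E in hw; case/r3_inv: hw => w0 w1 w2.
  have wt : th i.+1 j.+1 = w 0 o3.
    by rewrite /th (ltn_ord i) (ltn_ord j) /= !inord_val.
  apply/rowP; apply: ord4P; rewrite ExtE'; cbn [Nat.eqb nat_of_ord o0 o1 o2 o3];
    rewrite ?w0 ?w1 ?w2 ?wt; case: (Nat.eqb i 0); case: (Nat.eqb i 1); case: (Nat.eqb j 0);
    rewrite ?andbF ?andbT; ring.
have isoT : alg_iso T (Ext th).
  exists (invmx Q); split; first by rewrite unitmx_inv.
  move=> x y; apply: (can_inj (mulmxK Qu)).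
  by rewrite mulmxKV // (@amul_Q 4 T (Ext th) Q KEY) !mulmxKV.
have ncd' : ~ (th 3 2 = 0 /\ th 3 3 = 0 /\ th 2 3 = 0 /\ th 3 1 = - (2 * th 1 3)).
  move=> [e32 [e33 [e23 e31]]]; apply: ncd; apply: (@CD_iso 4 T (Ext th) isoT); exact: CD_Ext.
have [l [al iso2]] := @classify th nt ncd'.
by exists l; split => //; exact: (@alg_iso_trans 4 T (Ext th) (Nalg l) isoT iso2).
Qed.


Theorem mainTheorem3 :
  (forall T : sconst 4,
     ann_dim1 T -> quot_ann_iso T CD3_03 -> ~ is_CD T ->
     exists l : Nlab, Nadm l /\ alg_iso T (Nalg l))
  /\
  (forall l l' : Nlab, Nadm l -> Nadm l' ->
     (alg_iso (Nalg l) (Nalg l') <->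
        l = l'
        \/ (exists a b : C, l = N29 a b /\ l' = N29 (- a) b)
        \/ (exists a : C, l = N31 a /\ l' = N31 (- a)))).
Proof.
split; first exact: part1.
move=> l l' al al'; split; first exact: part2_fwd.
exact: part2_bwd.
Qed.
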